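(* Let $D\ge 1$, let $K\ge 0$, let $v\in\mathbb{R}^D$ with $v\neq 0$, and let $\epsilon\in\mathbb{R}^D$. Decompose $\epsilon=\epsilon_\parallel+\epsilon_\perp$, where $\epsilon_\parallel$ is the orthogonal projection of $\epsilon$ onto $\mathrm{span}(v)$ and $\langle \epsilon_\perp, v\rangle=0$. Suppose $\|\epsilon_\perp\|\ge \|v\|$ and $\|\epsilon_\parallel\|\le K\|v\|$. Then $v+\epsilon\neq 0$ and \[ \left\| \frac{v + \epsilon}{\|v + \epsilon\|} - \frac{v}{\|v\|} \right\| \;\geq\; \frac{1}{\sqrt{(1+K)^2+1}} \;>\; 0 . \]
   Context: All norms and inner products are the standard Euclidean ones on $\mathbb{R}^D$. *)

(* Defs.v *)
From HB Require Import structures.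
From mathcomp Require Import all_boot all_order all_algebra.
From mathcomp Require Import reals.
Set Implicit Arguments. Unset Strict Implicit. Unset Printing Implicit Defensive.
Import Order.TTheory GRing.Theory Num.Theory.
Local Open Scope ring_scope.

Definition dotv (R : realType) (D : nat) (u w : 'rV[R]_D) : R :=
  \sum_(i < D) u 0 i * w 0 i.

Definition normv (R : realType) (D : nat) (u : 'rV[R]_D) : R :=
  Num.sqrt (dotv u u).

(* Main.v *)
Require Import Defs.
From HB Require Import structures.
From mathcomp Require Import all_boot all_order all_algebra.
From mathcomp Require Import reals.
From mathcomp Require Import ring lra.
Import Order.TTheory GRing.Theory Num.Theory.
Local Open Scope ring_scope.

Lemma dotv_lin (R : realType) (D : nat) (a b : R) (u w z : 'rV[R]_D) :
  dotv (a *: u + b *: w) z = a * dotv u z + b * dotv w z.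
Proof.
rewrite /dotv !mulr_sumr -big_split /=; apply: eq_bigr => i _.
rewrite !mxE; ring.
Qed.

Lemma dotvC (R : realType) (D : nat) (u w : 'rV[R]_D) : dotv u w = dotv w u.
Proof. by rewrite /dotv; apply: eq_bigr => i _; rewrite mulrC. Qed.

Lemma dotv_ge0 (R : realType) (D : nat) (u : 'rV[R]_D) : 0 <= dotv u u.
Proof. by rewrite /dotv; apply: sumr_ge0 => i _; rewrite -expr2 sqr_ge0. Qed.

Lemma dotv_eq0 (R : realType) (D : nat) (u : 'rV[R]_D) : dotv u u = 0 -> u = 0.
Proof.
move=> H; apply/rowP => i; rewrite mxE.
have hge : forall j : 'I_D, predT j -> 0 <= u 0 j * u 0 j.
  by move=> j _; rewrite -expr2 sqr_ge0.
have := @psumr_eq0P R _ predT (fun i => u 0 i * u 0 i) hge H i isT.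
by move=> /eqP; rewrite mulf_eq0 orbb => /eqP.
Qed.

Lemma dot2 (R : realType) (D : nat) (a b : R) (v p : 'rV[R]_D) :
  dotv p v = 0 ->
  dotv (a *: v + b *: p) (a *: v + b *: p) = a^+2 * dotv v v + b^+2 * dotv p p.
Proof.
move=> h; rewrite dotv_lin (@dotvC _ _ v) (@dotvC _ _ p) !dotv_lin.
rewrite [dotv v p]dotvC h; ring.
Qed.

Lemma normv_sq (R : realType) (D : nat) (u : 'rV[R]_D) : normv u ^+ 2 = dotv u u.
Proof. by rewrite /normv sqr_sqrtr // dotv_ge0. Qed.

Theorem mainTheorem1 (R : realType) (D : nat) (hD : (1 <= D)%N) (K : R)
  (hK : 0 <= K) (v eps eps_par eps_perp : 'rV[R]_D)
  (hv : v != 0)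
  (hdec : eps = eps_par + eps_perp)
  (hpar : exists c : R, eps_par = c *: v)
  (hperp : dotv eps_perp v = 0)
  (h1 : normv v <= normv eps_perp)
  (h2 : normv eps_par <= K * normv v) :
  v + eps != 0 /\
  1 / Num.sqrt ((1 + K) ^+ 2 + 1) <=
    normv ((normv (v + eps))^-1 *: (v + eps) - (normv v)^-1 *: v) /\
  0 < 1 / Num.sqrt ((1 + K) ^+ 2 + 1).
Proof.
case: hpar => c hc; subst eps eps_par.
set p := eps_perp in hperp h1 h2 *.
set nn := dotv v v.
set PP := dotv p p.
have nnpos : 0 < nn.
  rewrite lt_neqAle dotv_ge0 andbT; apply/eqP => H.
  by move/negP: hv; apply; apply/eqP; apply: dotv_eq0.
have hnP : nn <= PP.
  by rewrite -(ler_sqrt _ (@dotv_ge0 _ _ p)).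
have hcK : c ^+ 2 <= K ^+ 2.
  have : normv (c *: v) ^+ 2 <= (K * normv v) ^+ 2.
    by rewrite lerXn2r // ?nnegrE ?mulr_ge0 ?sqrtr_ge0.
  rewrite normv_sq exprMn normv_sq.
  have -> : c *: v = c *: v + 0 *: p by rewrite scale0r addr0.
  rewrite dot2 // expr0n /= mul0r addr0 -/nn => H.
  by rewrite -(ler_pM2r nnpos).
have hw : v + (c *: v + p) = (1 + c) *: v + 1 *: p.
  by rewrite scale1r scalerDl scale1r addrA.
set a := 1 + c.
have ha : a ^+ 2 <= (1 + K) ^+ 2 by rewrite /a; nra.
set WW := dotv (v + (c *: v + p)) (v + (c *: v + p)).
have hWW : WW = a ^+ 2 * nn + PP by rewrite /WW hw dot2 // expr1n mul1r.
have WWpos : 0 < WW by rewrite hWW; nra.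
have wne0 : v + (c *: v + p) != 0.
  apply/eqP => H; move: WWpos; rewrite /WW H /dotv big1 ?ltxx // => i _.
  by rewrite mxE mul0r.
have Spos : 0 < (1 + K) ^+ 2 + 1 by nra.
have sqSpos : 0 < Num.sqrt ((1 + K) ^+ 2 + 1) by rewrite sqrtr_gt0.
split => //; split; last by rewrite divr_gt0.
set W := normv (v + (c *: v + p)).
set n := normv v.
have Wpos : 0 < W by rewrite /W /normv sqrtr_gt0.
have npos : 0 < n by rewrite /n /normv sqrtr_gt0.
have -> : W^-1 *: (v + (c *: v + p)) - n^-1 *: v = (a / W - n^-1) *: v + W^-1 *: p.
  rewrite hw; apply/rowP => i; rewrite !mxE /a; ring.
rewrite /normv dot2 // -/nn -/PP.
rewrite mul1r -(sqrtrV (ltW Spos)).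
apply: ler_wsqrtr.
have hW2 : W ^+ 2 = WW by rewrite /W normv_sq.
have key : ((1 + K) ^+ 2 + 1)^-1 <= W^-1 ^+ 2 * PP.
  rewrite exprVn hW2 mulrC -/(PP / WW) ler_pdivlMr // mulrC ler_pdivrMr //.
  rewrite hWW; nra.
apply: le_trans key _; rewrite lerDr; apply: mulr_ge0; [exact: sqr_ge0 | exact: ltW].
Qed.
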